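(* In the single-intervention standard stepped-wedge design ($m=1$, $T\ge3$ periods, $I=T-1$ clusters, cluster $i$ receiving the intervention exactly in periods $j>i$), if $\mathrm E(\bar{\mathbf y}_i)=\beta+\mathbf Z_i\delta$ with $\delta=(\delta_1,\dots,\delta_{T-1})'$ and $2+b-bT\neq0$, the GLS constant-effect estimator $\hat\theta$ satisfies $$\mathrm E(\hat\theta)=\frac{6\sum_{j=1}^{T-1}w_j\delta_j}{T(T-1)(T-2)(2+b-bT)},\qquad w_j=(T-j)\big[(b-1-bT)j+(1+b)(T-1)\big].$$
   Context: Cluster-period means $\bar{\mathbf y}_i\in\mathbb R^T$ with $\mathrm{Cov}(\bar{\mathbf y}_i)=\Sigma=\sigma_\alpha^2\mathbf 1\mathbf 1'+(\sigma_\epsilon^2/n)\mathbf I_T$, common cluster-period size $n$. $x_{ij}=1$ iff $j>i$; $\mathbf X_i=(x_{i1},\dots,x_{iT})'$. Exposure time $e_{ij}=\max\{j-i,0\}$; $\mathbf Z_i$ is the $T\times(T-1)$ matrix with $(j,e)$ entry $1$ if $e_{ij}=e$, else $0$. $\hat\theta$ is the GLS estimator (known $\Sigma$) of $\theta$ in the working model $\bar{\mathbf y}_i=\beta+\mathbf X_i\theta+\mathbf 1\alpha_i+\bar\epsilon_i$ with unrestricted $\beta\in\mathbb R^T$. $b=\sigma_\alpha^2/(T\sigma_\alpha^2+\sigma_\epsilon^2/n)$. *)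

(* Defs.v *)
From HB Require Import structures.
From mathcomp Require Import all_boot all_order all_algebra.
From mathcomp Require Import all_classical all_reals all_analysis.
Set Implicit Arguments. Unset Strict Implicit. Unset Printing Implicit Defensive.
Import Order.TTheory GRing.Theory Num.Theory.
Local Open Scope ring_scope.

Section SW.
Variable R : realType.
Variable T : nat.
(* Periods j = 1..T are represented by j' : 'I_T with j = j'+1;
   clusters i = 1..T-1 by i' : 'I_(T-1) with i = i'+1;
   exposure times e = 1..T-1 by e' : 'I_(T-1) with e = e'+1. *)

Definition Xvec (i : 'I_(T - 1)) : 'cV[R]_T := \col_(j < T) ((i < j)%N)%:R.

Definition expo (i : 'I_(T - 1)) (j : 'I_T) : nat := (j - i)%N.

Definition Zmat (i : 'I_(T - 1)) : 'M[R]_(T, T - 1) :=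
  \matrix_(j < T, e < T - 1) ((expo i j == e.+1)%N)%:R.

Definition Sigma (sa2 se2 : R) (n : nat) : 'M[R]_T :=
  sa2 *: const_mx 1 + (se2 / n%:R) *: 1%:M.

(* design matrix of the working model for cluster i: ybar_i = [I_T | X_i] (beta; theta) + ... *)
Definition Dmat (i : 'I_(T - 1)) : 'M[R]_(T, T + 1) := row_mx 1%:M (Xvec i).

Definition gls_info (S : 'M[R]_T) : 'M[R]_(T + 1) :=
  \sum_(i < T - 1) (Dmat i)^T *m invmx S *m Dmat i.

Definition gls_score (S : 'M[R]_T) (y : 'I_(T - 1) -> 'cV[R]_T) : 'cV[R]_(T + 1) :=
  \sum_(i < T - 1) (Dmat i)^T *m invmx S *m y i.

Definition gls (S : 'M[R]_T) (y : 'I_(T - 1) -> 'cV[R]_T) : 'cV[R]_(T + 1) :=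
  invmx (gls_info S) *m gls_score S y.

Definition theta_hat (S : 'M[R]_T) (y : 'I_(T - 1) -> 'cV[R]_T) : R :=
  gls S y (rshift T (ord0 : 'I_1)) 0.

Definition bcoef (sa2 se2 : R) (n : nat) : R := sa2 / (T%:R * sa2 + se2 / n%:R).

Definition wcoef (b : R) (j : nat) : R :=
  (T%:R - j%:R) * ((b - 1 - b * T%:R) * j%:R + (1 + b) * (T%:R - 1)).

End SW.

(* Main.v *)
Require Import Defs.
From HB Require Import structures.
From mathcomp Require Import all_boot all_order all_algebra.
From mathcomp Require Import all_classical all_reals all_analysis.
From mathcomp Require Import ring lra zify.
Import Order.TTheory GRing.Theory Num.Theory.
Local Open Scope ring_scope.

Set Implicit Arguments. Unset Strict Implicit. Unset Printing Implicit Defensive.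
Definition bfm (R : realType) (T : nat) (W : 'M[R]_T) (u v : 'cV[R]_T) : R :=
  (u^T *m W *m v) 0 0.

Lemma bfmDr (R : realType) T (W : 'M[R]_T) u v w : bfm W u (v + w) = bfm W u v + bfm W u w.
Proof. by rewrite /bfm mulmxDr mxE. Qed.
Lemma bfmZr (R : realType) T (W : 'M[R]_T) u a v : bfm W u (a *: v) = a * bfm W u v.
Proof. by rewrite /bfm -scalemxAr mxE. Qed.
Lemma bfmNr (R : realType) T (W : 'M[R]_T) u v : bfm W u (- v) = - bfm W u v.
Proof. by rewrite /bfm mulmxN mxE. Qed.
Lemma bfm_sumr (R : realType) T (W : 'M[R]_T) u (I : finType) (v : I -> 'cV[R]_T) :
  bfm W u (\sum_i v i) = \sum_i bfm W u (v i).
Proof. by rewrite /bfm mulmx_sumr summxE. Qed.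
Lemma bfm_suml (R : realType) T (W : 'M[R]_T) v (I : finType) (u : I -> 'cV[R]_T) :
  bfm W (\sum_i u i) v = \sum_i bfm W (u i) v.
Proof. by rewrite /bfm raddf_sum /= mulmx_suml mulmx_suml summxE. Qed.

Lemma sum_col_mx (R : realType) m1 m2 n (I : finType) (a : I -> 'M[R]_(m1, n)) (b : I -> 'M[R]_(m2, n)) :
  \sum_i col_mx (a i) (b i) = col_mx (\sum_i a i) (\sum_i b i).
Proof.
elim/big_rec3: _ => [|i x y z _ ->]; first by rewrite col_mx0.
by rewrite add_col_mx.
Qed.

Definition Fop (R : realType) T (W : 'M[R]_T) (y : 'I_(T - 1) -> 'cV[R]_T) : 'cV[R]_(T + 1) :=
  \sum_(i < T - 1) (Dmat R i)^T *m W *m y i.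

Lemma FopE (R : realType) T (W : 'M[R]_T) y :
  Fop W y = col_mx (W *m \sum_i y i) (\sum_i bfm W (Xvec R i) (y i))%:M.
Proof.
rewrite /Fop raddf_sum /=.
under eq_bigr => i _ do
  rewrite /Dmat tr_row_mx trmx1 mul_col_mx mul_col_mx mul1mx (mx11_scalar (_ *m _ *m _)).
rewrite sum_col_mx; congr col_mx.
apply/matrixP=> a b; rewrite !ord1 summxE !mxE mulr1n; apply: eq_bigr => i _; rewrite mxE mulr1n //.
Qed.

Lemma info_mul (R : realType) T (W : 'M[R]_T) (g : 'cV[R]_(T + 1)) :
  (\sum_(i < T - 1) (Dmat R i)^T *m W *m Dmat R i) *m g = Fop W (fun i => Dmat R i *m g).
Proof. by rewrite mulmx_suml; apply: eq_bigr => i _; rewrite mulmxA. Qed.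

Lemma Dg (R : realType) T (i : 'I_(T - 1)) (gb : 'cV[R]_T) (th : R) :
  Dmat R i *m col_mx gb (th%:M) = gb + th *: Xvec R i.
Proof. by rewrite /Dmat mul_row_col mul1mx mul_mx_scalar. Qed.

Lemma sumDg (R : realType) T (gb : 'cV[R]_T) (th : R) :
  \sum_(i < T - 1) (gb + th *: Xvec R i) =
  (T - 1)%:R *: gb + th *: \sum_(i < T - 1) Xvec R i.
Proof. by rewrite big_split /= sumr_const card_ord scaler_nat scaler_sumr. Qed.

Lemma bfm_sumDg (R : realType) T (W : 'M[R]_T) (gb : 'cV[R]_T) (th : R) :
  \sum_(i < T - 1) bfm W (Xvec R i) (gb + th *: Xvec R i) =
  bfm W (\sum_(i < T - 1) Xvec R i) gb + th * \sum_(i < T - 1) bfm W (Xvec R i) (Xvec R i).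
Proof.
rewrite bfm_suml mulr_sumr -big_split /=; apply: eq_bigr => i _.
by rewrite bfmDr bfmZr.
Qed.

Lemma solve (R : realType) T (S : 'M[R]_T) (mu : 'I_(T - 1) -> 'cV[R]_T) :
  (1 < T)%N -> S \in unitmx -> (invmx S)^T = invmx S ->
  let W := invmx S in
  let Xs := \sum_(i < T - 1) Xvec R i in
  let Qv := \sum_(i < T - 1) bfm W (Xvec R i) (Xvec R i) - bfm W Xs Xs / (T - 1)%:R in
  Qv != 0 ->
  theta_hat S mu =
    (\sum_(i < T - 1) bfm W (Xvec R i) (mu i) - bfm W Xs (\sum_(i < T - 1) mu i) / (T - 1)%:R) / Qv.
Proof.
move=> T1 uS WT W Xs Qv Q0.
have T0 : (T - 1)%:R != 0 :> R by rewrite pnatr_eq0 -lt0n subn_gt0.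
set M := gls_info S.
have MT : M^T = M.
  rewrite /M /gls_info raddf_sum /=; apply: eq_bigr => i _.
  by rewrite !trmx_mul trmxK WT mulmxA.
have ker : forall g : 'cV[R]_(T + 1), M *m g = 0 -> g = 0.
  move=> g; rewrite -(vsubmxK g) (mx11_scalar (dsubmx g)).
  set gb := usubmx g; set th := dsubmx g 0 0.
  rewrite /M /gls_info info_mul FopE.
  under eq_bigr => i _ do rewrite Dg.
  under [X in (X%:M)]eq_bigr => i _ do rewrite Dg.
  rewrite -col_mx0 => /eq_col_mx [H1 H2].
  have H1' : (T - 1)%:R *: gb + th *: Xs = 0.
    by rewrite -sumDg -(mulKVmx uS (\sum_i _)) -/W H1 mulmx0.
  have Hgb : gb = - ((T - 1)%:R^-1 * th) *: Xs.
    apply: (scalerI T0); rewrite scalerA mulrN mulrA divff // mul1r scaleNr.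
    by apply/eqP; rewrite -addr_eq0; apply/eqP.
  have H2' : \sum_(i < T - 1) bfm W (Xvec R i) (gb + th *: Xvec R i) = 0.
    by have := congr1 (fun A : 'M[R]_1 => A 0 0) H2; rewrite !mxE /= mulr1n.
  rewrite bfm_sumDg Hgb bfmZr -/Xs in H2'.
  have th0 : th = 0.
    have : th * Qv = 0.
      by rewrite -H2' /Qv; ring.
    by move/eqP; rewrite mulf_eq0 (negbTE Q0) orbF => /eqP.
  rewrite Hgb th0 mulr0 oppr0 scale0r; congr col_mx.
  by apply/matrixP=> a b; rewrite !mxE mul0rn.
have uM : M \in unitmx.
  rewrite -unitmx_tr -row_free_unit; apply: inj_row_free => v Hv.
  have := congr1 trmx Hv; rewrite trmx_mul trmxK trmx0.
  by move/ker => /(congr1 trmx); rewrite trmxK trmx0.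
set Nv := _ - _.
set th := Nv / Qv.
set gb := (T - 1)%:R^-1 *: (\sum_(i < T - 1) mu i - th *: Xs).
have Hg : M *m col_mx gb th%:M = gls_score S mu.
  rewrite /M /gls_info info_mul.
  rewrite (_ : gls_score S mu = Fop W mu) // !FopE.
  under eq_bigr => i _ do rewrite Dg.
  under [X in (X%:M)]eq_bigr => i _ do rewrite Dg.
  rewrite sumDg bfm_sumDg -/Xs; congr col_mx.
    by rewrite /gb scalerA divff // scale1r subrK.
  congr (_%:M).
  rewrite /gb bfmZr bfmDr bfmNr bfmZr /th /Nv /Qv.
  field; apply/andP; split=> //.
  have -> : (\sum_(i < T - 1) bfm W (Xvec R i) (Xvec R i)) * (T - 1)%:R - bfm W Xs Xs
     = Qv * (T - 1)%:R by rewrite /Qv; field.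
  by rewrite mulf_neq0.
by rewrite /theta_hat /gls -Hg mulKmx // col_mxEd mxE eqxx mulr1n.
Qed.

Lemma sum_delta (R : realType) (T c : nat) (f : nat -> R) :
  \sum_(j < T) ((nat_of_ord j == c)%:R * f j) = (c < T)%:R * f c.
Proof.
elim: T => [|T IH]; first by rewrite big_ord0 ltn0 mul0r.
rewrite big_ord_recr /= IH.
case: (ltngtP c T) => h.
- by rewrite mul0r addr0 ltnS ltnW.
- by rewrite !mul0r addr0 ltnS leqNgt h mul0r.
- by rewrite h ltnSn mul0r add0r.
Qed.

Lemma sum_lt (R : realType) (T k : nat) (f : nat -> R) : (k <= T)%N ->
  \sum_(i < T) ((i < k)%:R * f i) = \sum_(i < k) f i.
Proof.
elim: T => [|T IH]; first by rewrite leqn0 => /eqP ->; rewrite !big_ord0.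
rewrite leq_eqVlt => /orP [/eqP ->|].
  rewrite big_ord_recr /= ltnSn mul1r [RHS]big_ord_recr /=; congr (_ + _).
  by apply: eq_bigr => i _; rewrite ltnS ltnW // mul1r.
rewrite ltnS => hk; rewrite big_ord_recr /= IH //.
by rewrite ltnNge hk mul0r addr0.
Qed.

Lemma sum_id (R : realType) (k : nat) :
  \sum_(i < k) (i%:R : R) = k%:R * (k%:R - 1) / 2.
Proof.
elim: k => [|k IH]; first by rewrite big_ord0 mul0r mul0r.
rewrite big_ord_recr /= IH -natr1.
by field.
Qed.

Lemma sum_sq (R : realType) (k : nat) :
  \sum_(i < k) (i%:R ^+ 2 : R) = k%:R * (k%:R - 1) * (2 * k%:R - 1) / 6.
Proof.
elim: k => [|k IH]; first by rewrite big_ord0 !mul0r.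
rewrite big_ord_recr /= IH -natr1.
by field.
Qed.

Lemma natr_not (R : realType) (c : bool) : ((~~ c)%:R : R) = 1 - c%:R.
Proof. by case: c; rewrite ?subrr ?subr0. Qed.

Lemma X_ent (R : realType) T (i : 'I_(T - 1)) (j : 'I_T) :
  Xvec R i j 0 = (i < j)%:R.
Proof. by rewrite mxE. Qed.

Lemma Xs_ent (R : realType) T (j : 'I_T) :
  (\sum_(i < T - 1) Xvec R i) j 0 = j%:R.
Proof.
rewrite summxE.
under eq_bigr => i _ do rewrite X_ent -[(_ < _)%:R]mulr1.
rewrite (@sum_lt R (T - 1) j (fun _ => 1)); last by have := ltn_ord j; lia.
by rewrite sumr_const card_ord.
Qed.

Lemma X_sum (R : realType) T (i : 'I_(T - 1)) :
  \sum_(j < T) Xvec R i j 0 = T%:R - 1 - i%:R.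
Proof.
under eq_bigr => j _ do rewrite X_ent ltnNge natr_not -ltnS.
rewrite sumrB sumr_const card_ord.
under eq_bigr => j _ do rewrite -[(_ < _)%:R]mulr1.
rewrite (@sum_lt R T i.+1 (fun _ => 1)); last by have := ltn_ord i; lia.
by rewrite sumr_const card_ord -natr1; ring.
Qed.

Lemma z_ent (R : realType) T (i : 'I_(T - 1)) (delta : 'cV[R]_(T - 1)) (j : 'I_T) :
  (Zmat R i *m delta) j 0 = \sum_(e < T - 1) ((nat_of_ord j == i + e.+1)%N)%:R * delta e 0.
Proof.
rewrite mxE; apply: eq_bigr => e _; rewrite mxE /expo.
congr (_%:R * _); case: (@eqP _ (j - i)%N e.+1); case: (@eqP _ (nat_of_ord j) (i + e.+1)%N) => // h1 h2; lia.
Qed.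

Lemma z_wsum (R : realType) T (i : 'I_(T - 1)) (delta : 'cV[R]_(T - 1)) (F : nat -> R) :
  \sum_(j < T) F j * (Zmat R i *m delta) j 0 =
  \sum_(e < T - 1) delta e 0 * ((i + e.+1 < T)%:R * F (i + e.+1)%N).
Proof.
under eq_bigr => j _ do rewrite z_ent mulr_sumr.
rewrite exchange_big /=; apply: eq_bigr => e _.
rewrite -(sum_delta T (i + e.+1) F) mulr_sumr; apply: eq_bigr => j _.
by ring.
Qed.

Lemma bfmW (R : realType) T (s b : R) (u v : 'cV[R]_T) :
  bfm (s^-1 *: (1%:M - b *: const_mx 1)) u v =
  s^-1 * (\sum_j u j 0 * v j 0 - b * ((\sum_j u j 0) * (\sum_j v j 0))).
Proof.
have J : const_mx 1 = (const_mx 1 : 'cV[R]_T) *m (const_mx 1 : 'cV[R]_T)^T.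
  by apply/matrixP => a c; rewrite !mxE big_ord1 !mxE mulr1.
rewrite /bfm J -scalemxAr -scalemxAl mulmxBr mulmxBl mulmx1 -scalemxAr -scalemxAl.
have E : u^T *m ((const_mx 1 : 'cV[R]_T) *m (const_mx 1 : 'cV[R]_T)^T) *m v =
   (u^T *m (const_mx 1 : 'cV[R]_T)) *m ((const_mx 1 : 'cV[R]_T)^T *m v) by rewrite !mulmxA.
rewrite E.
rewrite !mxE big_ord1; congr (_ * (_ - _ * (_ * _))).
- by apply: eq_bigr => j _; rewrite mxE.
- by rewrite mxE; apply: eq_bigr => j _; rewrite !mxE mulr1.
- by rewrite mxE; apply: eq_bigr => j _; rewrite !mxE mul1r.
Qed.

Lemma Sigma_inv (R : realType) T (a s : R) : 0 <= a -> 0 < s ->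
  (a *: const_mx 1 + s *: 1%:M : 'M[R]_T) *m
     (s^-1 *: (1%:M - (a / (T%:R * a + s)) *: const_mx 1)) = 1%:M.
Proof.
move=> a0 s0.
have d0 : T%:R * a + s != 0.
  by rewrite gt_eqF // ltr_wpDl // mulr_ge0.
have JJ : (const_mx 1 : 'M[R]_T) *m (const_mx 1 : 'M[R]_T) = T%:R *: (const_mx 1 : 'M[R]_T).
  apply/matrixP => i j; rewrite !mxE.
  under eq_bigr do rewrite !mxE mulr1.
  by rewrite sumr_const card_ord mulr1.
set J := const_mx 1 : 'M[R]_T.
have SJ : (a *: J + s *: 1%:M) *m J = (T%:R * a + s) *: J.
  by rewrite mulmxDl -!scalemxAl JJ mul1mx scalerA scalerDl mulrC.
rewrite -scalemxAr mulmxBr mulmx1 -scalemxAr SJ scalerA.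
rewrite divfK // addrAC subrr add0r scalerA mulVf ?scale1r //.
by rewrite gt_eqF.
Qed.

Lemma Nsplit (R : realType) T (W : 'M[R]_T) (beta : 'cV[R]_T) (z : 'I_(T - 1) -> 'cV[R]_T) :
  (1 < T)%N ->
  \sum_(i < T - 1) bfm W (Xvec R i) (beta + z i) -
    bfm W (\sum_(i < T - 1) Xvec R i) (\sum_(i < T - 1) (beta + z i)) / (T - 1)%:R =
  \sum_(i < T - 1) (bfm W (Xvec R i) (z i) - bfm W (\sum_(i < T - 1) Xvec R i) (z i) / (T - 1)%:R).
Proof.
move=> T1.
have T0 : (T - 1)%:R != 0 :> R by rewrite pnatr_eq0 -lt0n subn_gt0.
rewrite sumrB; rewrite -mulr_suml -bfm_sumr.
under eq_bigr do rewrite bfmDr.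
rewrite big_split /= -bfm_suml big_split /= sumr_const card_ord -scaler_nat.
by rewrite bfmDr bfmZr; field.
Qed.

Lemma sum_poly1 (R : realType) (k : nat) (c0 c1 : R) :
  \sum_(i < k) (c0 + c1 * i%:R) = c0 * k%:R + c1 * (k%:R * (k%:R - 1) / 2).
Proof.
by rewrite big_split /= sumr_const card_ord -mulr_sumr sum_id mulr_natr.
Qed.

Lemma sum_poly2 (R : realType) (k : nat) (c0 c1 c2 : R) :
  \sum_(i < k) (c0 + c1 * i%:R + c2 * i%:R ^+ 2) =
  c0 * k%:R + c1 * (k%:R * (k%:R - 1) / 2) + c2 * (k%:R * (k%:R - 1) * (2 * k%:R - 1) / 6).
Proof.
by rewrite big_split /= sum_poly1 -mulr_sumr sum_sq.
Qed.

Lemma bool_sq (R : realType) (c : bool) : (c%:R * c%:R : R) = c%:R.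
Proof. by case: c; rewrite ?mulr1 ?mulr0. Qed.

Lemma Qval (R : realType) T (s b : R) : (1 < T)%N -> s != 0 ->
  \sum_(i < T - 1) bfm (s^-1 *: (1%:M - b *: const_mx 1)) (Xvec R i) (Xvec R i) -
   bfm (s^-1 *: (1%:M - b *: const_mx 1)) (\sum_(i < T - 1) Xvec R i) (\sum_(i < T - 1) Xvec R i)
     / (T - 1)%:R
 = s^-1 * (T%:R * (T%:R - 2) * (2 + b - b * T%:R) / 12).
Proof.
move=> T1 s0.
have T0 : (T - 1)%:R != 0 :> R by rewrite pnatr_eq0 -lt0n subn_gt0.
have ET : (T - 1)%:R = T%:R - 1 :> R by rewrite natrB // ltnW.
transitivity (\sum_(i < T - 1) (s^-1 * ((T%:R - 1) - b * (T%:R - 1) ^+ 2)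
   + s^-1 * (-1 + 2 * b * (T%:R - 1)) * i%:R + (- s^-1 * b) * i%:R ^+ 2)
   - bfm (s^-1 *: (1%:M - b *: const_mx 1)) (\sum_(i < T - 1) Xvec R i) (\sum_(i < T - 1) Xvec R i)
     / (T - 1)%:R).
  congr (_ - _); apply: eq_bigr => i _.
  rewrite bfmW.
  under eq_bigr do rewrite X_ent bool_sq -X_ent.
  rewrite X_sum; ring.
rewrite sum_poly2 bfmW.
under eq_bigr do rewrite Xs_ent.
rewrite (eq_bigr (fun j : 'I_T => (nat_of_ord j)%:R ^+ 2)); last by move=> j _; rewrite expr2.
under [X in X * X]eq_bigr do rewrite Xs_ent.
rewrite sum_sq sum_id ET.
have T0' : T%:R - 1 != 0 :> R by rewrite -ET.
move: T0' s0; set t := (T%:R : R) => T0' s0.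
by field; rewrite s0.
Qed.

Lemma ind_eq (i e T : nat) : (i + e.+1 < T)%N = (i < T - e.+1)%N.
Proof. by apply/idP/idP => h; lia. Qed.

Lemma z_sum (R : realType) T (i : 'I_(T - 1)) (delta : 'cV[R]_(T - 1)) :
  \sum_(j < T) (Zmat R i *m delta) j 0 =
  \sum_(e < T - 1) delta e 0 * ((i + e.+1 < T)%:R * 1).
Proof.
rewrite -(z_wsum i delta (fun _ => 1)); apply: eq_bigr => j _; by rewrite mul1r.
Qed.

Definition gfun (R : realType) (T : nat) (b : R) (i e : nat) : R :=
  1 - b * (T%:R - 1 - i%:R) - (i%:R + e%:R + 1) / (T%:R - 1) + b * T%:R / 2.

Lemma Nper (R : realType) T (s b : R) (delta : 'cV[R]_(T - 1)) (i : 'I_(T - 1)) :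
  (1 < T)%N -> s != 0 ->
  bfm (s^-1 *: (1%:M - b *: const_mx 1)) (Xvec R i) (Zmat R i *m delta) -
  bfm (s^-1 *: (1%:M - b *: const_mx 1)) (\sum_(i < T - 1) Xvec R i) (Zmat R i *m delta)
    / (T - 1)%:R =
  \sum_(e < T - 1) delta e 0 * ((i + e.+1 < T)%:R * (s^-1 * gfun T b i e)).
Proof.
move=> T1 s0.
have T0 : (T - 1)%:R != 0 :> R by rewrite pnatr_eq0 -lt0n subn_gt0.
have ET : (T - 1)%:R = T%:R - 1 :> R by rewrite natrB // ltnW.
rewrite !bfmW X_sum z_sum.
under eq_bigr do rewrite X_ent.
rewrite (z_wsum i delta (fun j => (i < j)%:R)).
have -> : \sum_(j < T) (\sum_(i0 < T - 1) Xvec R i0) j 0 = T%:R * (T%:R - 1) / 2.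
  by under eq_bigr do rewrite Xs_ent; exact: sum_id.
have -> : \sum_(j < T) (\sum_(i0 < T - 1) Xvec R i0) j 0 * (Zmat R i *m delta) j 0 =
   \sum_(e < T - 1) delta e 0 * ((i + e.+1 < T)%:R * (i + e.+1)%:R).
  by under eq_bigr do rewrite Xs_ent; exact: (z_wsum i delta (fun j => j%:R)).
set A := \sum_(e < T - 1) _ * (_ * 1).
have -> : \sum_(e < T - 1) delta e 0 * ((i + e.+1 < T)%:R * (i < i + e.+1)%:R) = A.
  by apply: eq_bigr => e _; rewrite addnS ltnS leq_addr.
set H := \sum_(e < T - 1) _ * (_ * (_ + _)%:R).
have T0' : T%:R - 1 != 0 :> R by rewrite -ET.
have -> : s^-1 * (A - b * ((T%:R - 1 - i%:R) * A)) -
   s^-1 * (H - b * (T%:R * (T%:R - 1) / 2 * A)) / (T - 1)%:R =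
   (s^-1 * (1 - b * (T%:R - 1 - i%:R) + b * T%:R / 2)) * A +
   (- s^-1 / (T%:R - 1)) * H.
  by rewrite ET; field; rewrite T0' s0.
rewrite /A /H !big_distrr -big_split /=; apply: eq_bigr => e _.
rewrite /gfun -addnS natrD -natr1.
by field; rewrite T0' s0.
Qed.

Lemma Ecoef (R : realType) T (s b : R) (e : 'I_(T - 1)) : (2 < T)%N -> s != 0 ->
  \sum_(i < T - 1) ((i + e.+1 < T)%:R * (s^-1 * gfun T b i e)) =
  s^-1 * (wcoef T b e.+1 / (2 * (T%:R - 1))).
Proof.
move=> T2 s0.
have ET : (T - 1)%:R = T%:R - 1 :> R by rewrite natrB // ltnW // ltnW.
have T0' : T%:R - 1 != 0 :> R by rewrite -ET pnatr_eq0 -lt0n subn_gt0 ltnW.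
under eq_bigr do rewrite ind_eq.
rewrite (@sum_lt R (T - 1) (T - e.+1) (fun i => s^-1 * gfun T b i e)); last first.
  by have := ltn_ord e; lia.
transitivity (\sum_(i < T - e.+1) (s^-1 * (1 - b * (T%:R - 1) - (e%:R + 1) / (T%:R - 1) + b * T%:R / 2)
   + s^-1 * (b - 1 / (T%:R - 1)) * i%:R)).
  by apply: eq_bigr => i _; rewrite /gfun; ring.
rewrite sum_poly1 natrB; last by have := ltn_ord e; lia.
rewrite /wcoef -natr1.
by field; rewrite T0' s0.
Qed.

Lemma determ (R : realType) (T : nat) (sa2 se2 : R) (n : nat)
  (beta : 'cV[R]_T) (delta : 'cV[R]_(T - 1)) :
  (3 <= T)%N -> (0 < n)%N -> 0 <= sa2 -> 0 < se2 ->
  2 + bcoef T sa2 se2 n - bcoef T sa2 se2 n * T%:R != 0 ->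
  theta_hat (Sigma T sa2 se2 n) (fun i => beta + Zmat R i *m delta) =
  ((6 * \sum_(j < T - 1) wcoef T (bcoef T sa2 se2 n) j.+1 * delta j 0)
    / (T%:R * (T%:R - 1) * (T%:R - 2)
       * (2 + bcoef T sa2 se2 n - bcoef T sa2 se2 n * T%:R))).
Proof.
move=> T3 n0 a0 se0 Hb.
have sp : 0 < se2 / n%:R by rewrite divr_gt0 // ltr0n.
have sn0 : se2 / n%:R != 0 by rewrite gt_eqF.
have HS : Sigma T sa2 se2 n *m ((se2 / n%:R)^-1 *: (1%:M - bcoef T sa2 se2 n *: const_mx 1)) = 1%:M.
  exact: Sigma_inv.
move: HS sn0 Hb; set s := se2 / n%:R; set b := bcoef T sa2 se2 n => HS sn0 Hb.
set Wc := s^-1 *: (1%:M - b *: const_mx 1) in HS *.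
have uS := (mulmx1_unit HS).1.
have HW : invmx (Sigma T sa2 se2 n) = Wc.
  by rewrite -[Wc]mul1mx -(mulVmx uS) -mulmxA HS mulmx1.
have WT : Wc^T = Wc.
  by apply/matrixP => i j; rewrite !mxE eq_sym.
have T1 : (1 < T)%N by apply: ltnW.
have := @solve R T (Sigma T sa2 se2 n) (fun i => beta + Zmat R i *m delta) T1 uS.
rewrite HW => /(_ WT).
cbv beta zeta.
rewrite Qval //.
have ET : (T - 1)%:R = T%:R - 1 :> R by rewrite natrB // ltnW // ltnW.
have t0 : T%:R != 0 :> R by rewrite pnatr_eq0 -lt0n ltnW // ltnW.
have t1 : T%:R - 1 != 0 :> R by rewrite -ET pnatr_eq0 -lt0n subn_gt0 ltnW.
have t2 : T%:R - 2 != 0 :> R.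
  have ET2 : (T - 2)%:R = T%:R - 2 :> R by rewrite natrB // ltnW.
  by rewrite -ET2 pnatr_eq0 -lt0n subn_gt0.
have Q0 : s^-1 * (T%:R * (T%:R - 2) * (2 + b - b * T%:R) / 12) != 0.
  by rewrite !mulf_neq0 // ?invr_neq0 // pnatr_eq0.
move=> /(_ Q0) ->.
rewrite (Nsplit _ _ (fun i => Zmat R i *m delta) T1).
under eq_bigr do rewrite Nper //.
rewrite exchange_big /=.
under eq_bigr do rewrite -mulr_sumr Ecoef //.
have -> : \sum_(e < T - 1) delta e 0 * (s^-1 * (wcoef T b e.+1 / (2 * (T%:R - 1)))) =
  s^-1 / (2 * (T%:R - 1)) * \sum_(j < T - 1) wcoef T b j.+1 * delta j 0.
  rewrite big_distrr /=; apply: eq_bigr => e _; by field; rewrite t1.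
by field; rewrite sn0 t0 t1 t2 Hb.
Qed.


Unset Implicit Arguments. Set Strict Implicit.

Lemma E_lin (R : realType) (d : measure_display) (Omega : measurableType d)
  (P : probability Omega R) (I : Type) (s : seq I) (c : I -> R)
  (X : I -> Omega -> R) (e : I -> R) :
  (forall i, X i \in Lfun P 1) -> (forall i, ('E_P[X i] = (e i)%:E)%E) ->
  ('E_P[fun w => (\sum_(i <- s) c i * X i w)%R] = (\sum_(i <- s) c i * e i)%:E)%E.
Proof.
move=> HL HE; elim: s => [|a s IH].
  under eq_fun do rewrite big_nil.
  by rewrite big_nil expectation_cst.
have -> : (fun w => \sum_(i <- a :: s) c i * X i w) =
   (c a \o* X a) \+ (fun w => \sum_(i <- s) c i * X i w).
  by apply/funext => w; rewrite big_cons /= mulrC.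
have Hr : (fun w => \sum_(i <- s) c i * X i w) \in Lfun P 1.
  have -> : (fun w => \sum_(i <- s) c i * X i w) = \sum_(i <- s) (c i *: X i).
    by rewrite fct_sumE.
  by apply: rpred_sum => i _; apply: rpredZ.
have Ha : (c a \o* X a) \in Lfun P 1.
  have -> : (c a \o* X a) = c a *: X a by apply/funext => w /=; rewrite mulrC.
  exact: rpredZ.
rewrite expectationD // IH expectationZl // HE big_cons.
by rewrite -EFinM -EFinD.
Qed.

Lemma theta_lin (R : realType) (T : nat) (S : 'M[R]_T) (y : 'I_(T - 1) -> 'cV[R]_T) :
  theta_hat S y = \sum_(i < T - 1) \sum_(j < T)
    (invmx (gls_info S) *m ((Dmat R i)^T *m invmx S)) (rshift T (ord0 : 'I_1)) j * y i j 0.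
Proof.
rewrite /theta_hat /gls /gls_score mulmx_sumr summxE; apply: eq_bigr => i _.
by rewrite !mulmxA mxE.
Qed.



Theorem mainTheorem3 (R : realType) (d : measure_display) (Omega : measurableType d)
  (P : probability Omega R) (T : nat) (sa2 se2 : R) (n : nat)
  (ybar : 'I_(T - 1) -> 'I_T -> {RV P >-> R})
  (beta : 'cV[R]_T) (delta : 'cV[R]_(T - 1)) :
  (3 <= T)%N -> (0 < n)%N -> 0 <= sa2 -> 0 < se2 ->
  (forall i j, (ybar i j : Omega -> R) \in Lfun P 1) ->
  (forall i j, ('E_P[ybar i j] = ((beta + Zmat R i *m delta) j 0)%:E)%E) ->
  2 + bcoef T sa2 se2 n - bcoef T sa2 se2 n * T%:R != 0 ->
  ('E_P[fun w => theta_hat (Sigma T sa2 se2 n) (fun i => \col_j ybar i j w)] =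
  ((6 * \sum_(j < T - 1) wcoef T (bcoef T sa2 se2 n) j.+1 * delta j 0)
    / (T%:R * (T%:R - 1) * (T%:R - 2)
       * (2 + bcoef T sa2 se2 n - bcoef T sa2 se2 n * T%:R)))%:E)%E.
Proof.
move=> T3 n0 a0 s0 HL HE Hb.
rewrite -(@determ R T sa2 se2 n beta delta) //.
set S := Sigma T sa2 se2 n.
set c := fun i j => (invmx (gls_info S) *m ((Dmat R i)^T *m invmx S)) (rshift T (ord0 : 'I_1)) j.
have -> : (fun w => theta_hat S (fun i => \col_j ybar i j w)) =
   (fun w => \sum_(p <- index_enum ('I_(T - 1) * 'I_T)%type) c p.1 p.2 * ybar p.1 p.2 w)%R.
  apply/funext => w; rewrite theta_lin pair_big /=; apply: eq_bigr => p _.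
  by rewrite mxE.
rewrite (@E_lin R d Omega P _ _ (fun p => c p.1 p.2) (fun p => ybar p.1 p.2)
   (fun p => (beta + Zmat R p.1 *m delta) p.2 0)).
- by rewrite theta_lin pair_big.
- by move=> p; apply: HL.
- by move=> p; apply: HE.
Qed.
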